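(* Let $\alpha\in\mathbb{R}$ be transcendental over $\mathbb{Q}$ and let $\mathbb{Q}(\alpha)^+=H_1\sqcup\cdots\sqcup H_k$ ($k$ finite) be a partition into pairwise disjoint nonempty subsets, each closed under addition and multiplication. Consider the set $L$ of elements $a\alpha+b>0$ with $a,b\in\mathbb{Q}$, $a\neq 0$. Then $L$ meets at most two of the sets $H_i$; and if it meets two of them, then two elements $a\alpha+b$ and $a'\alpha+b'$ of $L$ lie in the same $H_i$ if and only if $a$ and $a'$ have the same sign. *)

(* Defs.v *)
From HB Require Import structures.
From mathcomp Require Import all_boot all_order all_algebra.
From mathcomp Require Import reals.
Set Implicit Arguments. Unset Strict Implicit. Unset Printing Implicit Defensive.
Import Order.TTheory GRing.Theory Num.Theory.
Local Open Scope ring_scope.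

Definition qeval (R : realType) (p : {poly rat}) (x : R) : R :=
  (map_poly (@ratr R) p).[x].

Definition transcendental (R : realType) (alpha : R) : Prop :=
  forall p : {poly rat}, p != 0 -> qeval p alpha != 0.

Definition in_Qalpha (R : realType) (alpha x : R) : Prop :=
  exists p q : {poly rat}, qeval q alpha != 0 /\ x = qeval p alpha / qeval q alpha.

Definition in_Qalpha_pos (R : realType) (alpha x : R) : Prop :=
  in_Qalpha alpha x /\ 0 < x.

Definition semiring_partition (R : realType) (alpha : R) (k : nat)
    (H : 'I_k -> R -> Prop) : Prop :=
  [/\ forall i, exists x, H i x,
      forall i j x, H i x -> H j x -> i = j,
      forall x, in_Qalpha_pos alpha x <-> exists i, H i x,
      forall i x y, H i x -> H i y -> H i (x + y)
    & forall i x y, H i x -> H i y -> H i (x * y)].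

Definition in_L (R : realType) (alpha x : R) : Prop :=
  exists a b : rat, a != 0 /\ x = ratr a * alpha + ratr b /\ 0 < x.

Definition meets_L (R : realType) (alpha : R) (S : R -> Prop) : Prop :=
  exists x, in_L alpha x /\ S x.

(* Main.v *)
Require Import Defs.
From HB Require Import structures.
From mathcomp Require Import all_boot all_order all_algebra.
From mathcomp Require Import reals.
From mathcomp Require Import boolp ring lra.
Import Order.TTheory GRing.Theory Num.Theory.
Local Open Scope ring_scope.

Record good (R : realType) (k : nat) (H : 'I_k -> R -> Prop) (M : R -> Prop) : Prop := Good {
  g_disj : forall i j x, H i x -> H j x -> i = j;
  g_cov : forall x, M x -> 0 < x -> exists i, H i x;
  g_pos : forall i x, H i x -> M x /\ 0 < x;
  g_add : forall i x y, H i x -> H i y -> H i (x + y);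
  g_mul : forall i x y, H i x -> H i y -> H i (x * y);
  g_Msc : forall (q : rat) x, M x -> M (ratr q * x) }.
Arguments good {R k} H M.
Arguments g_disj {R k H M} _ {i j x}.
Arguments g_cov {R k H M} _ {x}.
Arguments g_pos {R k H M} _ {i x}.
Arguments g_add {R k H M} _ {i x y}.
Arguments g_mul {R k H M} _ {i x y}.
Arguments g_Msc {R k H M} _ q {x}.

Lemma g_muln {R : realType} {k : nat} {H : 'I_k -> R -> Prop} {M : R -> Prop}
  (G : good H M) i x n : H i x -> H i (x *+ n.+1).
Proof.
move=> Hx; elim: n => [|n IH]; first by rewrite mulr1n.
by rewrite mulrS; apply: (g_add G).
Qed.

Lemma g_scale {R : realType} {k : nat} {H : 'I_k -> R -> Prop} {M : R -> Prop}
  (G : good H M) i x q : H i x -> 0 < q -> H i (ratr q * x).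
Proof.
move=> Hx q0; have [Mx x0] := g_pos G Hx.
set d := `|denq q|%N; set n := `|numq q|%N.
have dgt : (0 < d)%N by rewrite /d absz_gt0 denq_neq0.
have ngt : (0 < n)%N by rewrite /n absz_gt0 numq_eq0 gt_eqF.
have eq : ratr q = n%:R / d%:R :> R.
  rewrite /ratr /n /d !pmulrn !gez0_abs //.
  by rewrite numq_ge0; apply: ltW.
set y := x / d%:R.
have My : M y by rewrite /y mulrC -(ratr_nat R) -fmorphV; apply: (g_Msc G).
have y0 : 0 < y by rewrite /y divr_gt0 // ltr0n.
have [l Hy] := g_cov G My y0.
have Hyd : H l (y *+ d) by have := g_muln G l y d.-1 Hy; rewrite prednK.
have yd : y *+ d = x by rewrite /y -mulr_natr divfK // pnatr_eq0 -lt0n.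
have li : l = i by apply: (g_disj G Hyd); rewrite yd.
have -> : ratr q * x = y *+ n.
  by rewrite eq /y -[RHS]mulr_natr; ring.
have Hiy : H i y by rewrite -li.
by have := g_muln G i y n.-1 Hiy; rewrite prednK.
Qed.


Lemma g_ex {R : realType} {k : nat} {H : 'I_k -> R -> Prop} {M : R -> Prop}
  (G : good H M) (b : R) (hb : forall e : rat, M (b + ratr e)) e :
  0 < b + ratr e -> exists i, H i (b + ratr e).
Proof. by move=> p; apply: (g_cov G). Qed.

Lemma g_conv {R : realType} {k : nat} {H : 'I_k -> R -> Prop} {M : R -> Prop}
  (G : good H M) (b : R) l (e h g : rat) : e < h -> h < g ->
  H l (b + ratr e) -> H l (b + ratr g) -> H l (b + ratr h).
Proof.
move=> eh hg He Hg.
have eg : e < g by apply: lt_trans hg.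
have -> : b + ratr h = ratr ((g - h) / (g - e)) * (b + ratr e)
                        + ratr ((h - e) / (g - e)) * (b + ratr g) :> R.
  rewrite !(rmorphD, rmorphN, rmorphM, fmorphV, rmorphB) /=.
  have : ratr e < ratr g :> R by rewrite ltr_rat.
  move=> h2. field. by rewrite subr_eq0 gt_eqF.
apply: (g_add G); apply: (g_scale G) => //; apply: divr_gt0; rewrite subr_gt0 //.
Qed.

Lemma g_mid {R : realType} {k : nat} {H : 'I_k -> R -> Prop} {M : R -> Prop}
  (G : good H M) (b : R) i j (e f : rat) : e < f ->
  H i (b + ratr e) -> H j (b + ratr f) -> H i (b + ratr ((e + f) / 2%:R)) -> i = j.
Proof.
move=> ef He Hf Hm.
have eq : (b + ratr f) * (b + ratr f) = (b + ratr e) * (b + ratr e)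
   + ratr (2%:R * (f - e)) * (b + ratr ((e + f) / 2%:R)) :> R.
  rewrite !(ratr_nat, rmorphD, rmorphN, rmorphM, fmorphV, rmorphB) /=.
  by field; rewrite ?pnatr_eq0.
have Hyy := g_mul G Hf Hf; rewrite eq in Hyy.
apply: (g_disj G _ Hyy).
apply: (g_add G); first exact: (g_mul G He He).
apply: (g_scale G) => //; apply: mulr_gt0; rewrite ?ltr0n // subr_gt0 //.
Qed.

Lemma g_dy {R : realType} {k : nat} {H : 'I_k -> R -> Prop} {M : R -> Prop}
  (G : good H M) (b : R) (hb : forall e : rat, M (b + ratr e)) i j (e f : rat) :
  e < f -> H i (b + ratr e) -> H j (b + ratr f) -> i != j ->
  forall n, exists j', j' != i /\ H j' (b + ratr (e + (f - e) / 2%:R ^+ n)).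
Proof.
move=> ef He Hf ij; elim=> [|n [j' [ne Hj']]].
  have -> : e + (f - e) / 2%:R ^+ 0 = f by rewrite expr0 divr1 addrC subrK.
  by exists j; rewrite eq_sym.
set p := e + (f - e) / 2%:R ^+ n in Hj'.
have ep : e < p by rewrite /p ltrDl divr_gt0 ?exprn_gt0 ?ltr0n // subr_gt0.
have mideq : e + (f - e) / 2%:R ^+ n.+1 = (e + p) / 2%:R.
  by rewrite /p exprS; field; rewrite ?expf_neq0 ?pnatr_eq0.
have pos : 0 < b + ratr ((e + p) / 2%:R).
  have [_ p0] := g_pos G He.
  have : ratr e < ratr ((e + p) / 2%:R) :> R.
    rewrite ltr_rat ltr_pdivlMr ?ltr0n //; lra.
  lra.
have [j'' Hj''] := g_cov G (hb _) pos.
exists j''; split; last by rewrite mideq.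
apply/eqP => eqi; subst j''.
have := g_mid G b i j' e p ep He Hj' Hj''; move=> eij; by rewrite eij eqxx in ne.
Qed.


Lemma g_Q {R : realType} {k : nat} {H : 'I_k -> R -> Prop} {M : R -> Prop}
  (G : good H M) (b : R) (hb : forall e : rat, M (b + ratr e)) l m (g h q : rat) :
  g < h -> g < q -> H l (b + ratr g) -> H l (b + ratr h) -> H m (b + ratr q) ->
  m != l -> False.
Proof.
move=> gh gq Hg Hh Hq ml.
have Hl : forall p : rat, g < p -> p <= h -> H l (b + ratr p).
  move=> p gp; rewrite le_eqVlt => /orP [/eqP -> // | ph].
  exact: (g_conv G b l g p h gp ph Hg Hh).
case: (lerP q h) => [qh | hq].
  by have := g_disj G Hq (Hl q gq qh) => eml; rewrite eml eqxx in ml.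
have lm : l != m by rewrite eq_sym.
have dy := g_dy G b hb l m g q gq Hg Hq lm.
set X := (q - g) / (h - g).
have X0 : 0 <= X by rewrite /X divr_ge0 // subr_ge0 ltW.
set n := Num.Def.archi_bound X.
have Xn : X < (2 ^ n)%:R.
  apply: lt_le_trans (archi_boundP X0) _.
  by rewrite ler_nat ltnW // ltn_expl.
have [j' [ne Hj']] := dy n.
set s := (q - g) / 2%:R ^+ n in Hj'.
have s0 : 0 < s by rewrite /s divr_gt0 ?exprn_gt0 ?ltr0n // subr_gt0.
have sh : s < h - g.
  rewrite /s ltr_pdivrMr ?exprn_gt0 ?ltr0n //.
  move: Xn; rewrite /X natrX ltr_pdivrMr ?subr_gt0 // mulrC //.
have gs : g < g + s by rewrite ltrDl.
clearbody s.
have sh' : g + s <= h by rewrite -lerBrDl ltW.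
have ejl := g_disj G Hj' (Hl (g + s) gs sh').
by rewrite ejl eqxx in ne.
Qed.


Lemma g_main {R : realType} {k : nat} {H : 'I_k -> R -> Prop} {M : R -> Prop}
  (G : good H M) (b : R) (hb : forall e : rat, M (b + ratr e)) i j (e f : rat) :
  e < f -> H i (b + ratr e) -> H j (b + ratr f) -> i != j -> False.
Proof.
move=> ef He Hf ij.
have [_ t0] := g_pos G He.
set t := b + ratr e in t0 He.
set N := Num.Def.archi_bound t^-1.
have hN : t^-1 < N%:R by apply: archi_boundP; rewrite invr_ge0 ltW.
have N0 : (0 < N)%N by rewrite -(ltr0n R); apply: lt_trans hN; rewrite invr_gt0.
set eps : rat := (N%:R)^-1.
have eps0 : 0 < eps by rewrite /eps invr_gt0 ltr0n.
have epst : ratr eps < t.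
  rewrite /eps fmorphV /= ratr_nat -[t]invrK ltf_pV2 ?posrE ?invr_gt0 ?ltr0n //.
pose gp (r : nat) : rat := e - eps * r%:R / (k.+1)%:R.
have K0 : 0 < ((k.+1)%:R : rat) by rewrite ltr0n.
have gle : forall r : 'I_k.+1, eps * r%:R / (k.+1)%:R <= eps.
  move=> r; rewrite ler_pdivrMr // ler_pM2l // ler_nat ltnW //.
have gge : forall r : 'I_k.+1, 0 <= eps * r%:R / (k.+1)%:R.
  by move=> r; rewrite divr_ge0 ?mulr_ge0 ?ler0n ?(ltW eps0) ?(ltW K0).
have gpos : forall r : 'I_k.+1, 0 < b + ratr (gp r).
  move=> r.
  have h2 : 0 < b + ratr (e - eps) by rewrite rmorphB /= addrA subr_gt0.
  have h3 : e - eps <= gp r by rewrite /gp lerD2l lerN2 gle.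
  by apply: lt_le_trans h2 _; rewrite lerD2l ler_rat.
have gple : forall r : 'I_k.+1, gp r <= e.
  by move=> r; rewrite /gp lerBlDr lerDl.
have glt : forall r1 r2 : nat, (r2 < r1)%N -> gp r1 < gp r2.
  move=> r1 r2 lt; rewrite /gp ltrD2l ltrN2 ltr_pM2r ?invr_gt0 // ltr_pM2l //.
  by rewrite ltr_nat.
pose c (r : 'I_k.+1) : 'I_k := proj1_sig (cid (g_cov G (hb _) (gpos r))).
have Hc : forall r, H (c r) (b + ratr (gp r)).
  by move=> r; rewrite /c; case: (cid _).
have key : forall r1 r2 : 'I_k.+1, (r2 < r1)%N -> c r1 != c r2.
  move=> r1 r2 lt; apply/eqP => ceq.
  have l12 := glt _ _ lt.
  have Hc2 : H (c r1) (b + ratr (gp r2)) by rewrite ceq.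
  case: (eqVneq (c r1) i) => [ci | ci].
    apply: (g_Q G b hb (c r1) j (gp r1) (gp r2) f l12 _ (Hc r1) Hc2 Hf).
      by apply: le_lt_trans (gple r1) ef.
    by rewrite ci eq_sym.
  apply: (g_Q G b hb (c r1) i (gp r1) (gp r2) e l12 _ (Hc r1) Hc2 He).
    by apply: lt_le_trans l12 (gple r2).
  by rewrite eq_sym.
have inj : injective c.
  move=> r1 r2 ceq; apply: val_inj => /=.
  case: (ltngtP r1 r2) => // h.
    by have := key _ _ h; rewrite ceq eqxx.
  by have := key _ _ h; rewrite ceq eqxx.
by have := leq_card c inj; rewrite !card_ord ltnn.
Qed.

Lemma g_ML {R : realType} {k : nat} {H : 'I_k -> R -> Prop} {M : R -> Prop}
  (G : good H M) (b : R) (hb : forall e : rat, M (b + ratr e)) i j (e f : rat) :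
  H i (b + ratr e) -> H j (b + ratr f) -> i = j.
Proof.
move=> He Hf; case: (eqVneq i j) => // ij; exfalso.
case: (ltgtP e f) => [ef | fe | efq].
- exact: (g_main G b hb i j e f ef He Hf ij).
- by apply: (g_main G b hb j i f e fe Hf He); rewrite eq_sym.
- by subst f; have := g_disj G He Hf => eij; rewrite eij eqxx in ij.
Qed.


Lemma qevalCM (R : realType) (alpha : R) (c : rat) (p : {poly rat}) :
  qeval (c%:P * p) alpha = ratr c * qeval p alpha.
Proof. by rewrite /qeval rmorphM /= map_polyC hornerM hornerC. Qed.

Lemma qeval_lin (R : realType) (alpha : R) (a e : rat) :
  qeval (a%:P * 'X + e%:P) alpha = ratr a * alpha + ratr e.
Proof.
by rewrite /qeval rmorphD rmorphM /= !map_polyC map_polyX hornerD hornerM hornerX !hornerC.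
Qed.

Lemma qeval1 (R : realType) (alpha : R) : qeval 1 alpha = 1.
Proof. by rewrite /qeval rmorph1 hornerC. Qed.

Lemma good_of (R : realType) (alpha : R) (k : nat) (H : 'I_k -> R -> Prop) :
  semiring_partition alpha H -> good H (in_Qalpha alpha).
Proof.
case=> hne hdisj hcov hadd hmul; split => //.
- by move=> x Mx x0; apply/hcov.
- by move=> i x Hx; apply/hcov; exists i.
- move=> q x [p [r [r0 ->]]]; exists (q%:P * p), r; split => //.
  by rewrite qevalCM mulrA.
Qed.

Lemma lin_in (R : realType) (alpha : R) (a e : rat) :
  in_Qalpha alpha (ratr a * alpha + ratr e).
Proof.
exists (a%:P * 'X + e%:P), 1; rewrite qeval1 qeval_lin divr1; split => //.
exact: oner_neq0.
Qed.


Lemma same_sign (a a' : rat) : a != 0 -> a' != 0 -> (0 < a) = (0 < a') -> 0 < a' / a.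
Proof.
move=> a0 a'0 s.
case ha: (0 < a) s => s.
  by apply: divr_gt0 => //; rewrite -s.
have ha2 : a < 0 by rewrite lt_neqAle a0 /= leNgt ha.
have ha3 : a' < 0 by rewrite lt_neqAle a'0 /= leNgt -s.
by rewrite -mulrNN -invrN divr_gt0 // oppr_gt0.
Qed.

Lemma SS (R : realType) (alpha : R) (k : nat) (H : 'I_k -> R -> Prop)
  (G : good H (in_Qalpha alpha)) i j (a b a' b' : rat) :
  a != 0 -> 0 < a' / a -> H i (ratr a * alpha + ratr b) ->
  H j (ratr a' * alpha + ratr b') -> i = j.
Proof.
move=> a0 c0 Hi Hj.
set be := ratr a * alpha in Hi.
have hb : forall e : rat, in_Qalpha alpha (be + ratr e) by move=> e; apply: lin_in.
have a'0 : a' != 0 by apply: contraTneq c0 => ->; rewrite mul0r ltxx.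
have q0 : 0 < a / a' by rewrite -invf_div invr_gt0.
have Hw := g_scale G j _ (a / a') Hj q0.
have eq : ratr (a / a') * (ratr a' * alpha + ratr b') = be + ratr (a * b' / a') :> R.
  rewrite /be !(rmorphM, fmorphV) /=; field; by rewrite fmorph_eq0.
rewrite eq in Hw.
exact: (g_ML G be hb i j b (a * b' / a') Hi Hw).
Qed.

Theorem corollary3p2 (R : realType) (alpha : R) (k : nat)
    (H : 'I_k -> R -> Prop) :
  transcendental alpha ->
  semiring_partition alpha H ->
  (forall i j l : 'I_k, meets_L alpha (H i) -> meets_L alpha (H j) ->
     meets_L alpha (H l) -> i = j \/ j = l \/ i = l) /\
  ((exists i j : 'I_k, i <> j /\ meets_L alpha (H i) /\ meets_L alpha (H j)) ->
   forall a b a' b' : rat, a != 0 -> a' != 0 ->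
     0 < ratr a * alpha + ratr b -> 0 < ratr a' * alpha + ratr b' ->
     ((exists i : 'I_k, H i (ratr a * alpha + ratr b) /\
                        H i (ratr a' * alpha + ratr b'))
      <-> ((0 < a) = (0 < a')))).
Proof.
move=> _ hpart; have G := good_of _ _ _ _ hpart.
have SSb : forall i j (a b a' b' : rat), a != 0 -> a' != 0 -> (0 < a) = (0 < a') ->
    H i (ratr a * alpha + ratr b) -> H j (ratr a' * alpha + ratr b') -> i = j.
  move=> i j a b a' b' a0 a'0 s Hi Hj.
  exact: (SS _ _ _ _ G i j a b a' b' a0 (same_sign _ _ a0 a'0 s) Hi Hj).
split.
{ move=> i j l [x [[a [b [a0 [-> _]]]] Hi]] [y [[a' [b' [a'0 [-> _]]]] Hj]]
    [z [[a'' [b'' [a''0 [-> _]]]] Hl]].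
  case s1: (0 < a); case s2: (0 < a'); case s3: (0 < a'').
  all: first [ left; exact: (SSb _ _ _ _ _ _ a0 a'0 (etrans s1 (esym s2)) Hi Hj)
             | right; left; exact: (SSb _ _ _ _ _ _ a'0 a''0 (etrans s2 (esym s3)) Hj Hl)
             | right; right; exact: (SSb _ _ _ _ _ _ a0 a''0 (etrans s1 (esym s3)) Hi Hl) ]. }
move=> [i0 [j0 [ne [[w0 [[c0 [d0 [c00 [-> _]]]] H0]] [w1 [[c1 [d1 [c10 [-> _]]]] H1]]]]]].
move=> a b a' b' a0 a'0 p p'; split.
{ move=> [m [Hm Hm']].
  case s1: (0 < a); case s2: (0 < a') => //; exfalso; apply: ne.
  all: have cl : forall c d l, c != 0 -> H l (ratr c * alpha + ratr d) -> l = m by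
    move=> c d l cn Hl; case sc: (0 < c);
    first [ exact: (SSb _ _ _ _ _ _ cn a0 (etrans sc (esym s1)) Hl Hm)
          | exact: (SSb _ _ _ _ _ _ cn a'0 (etrans sc (esym s2)) Hl Hm') ].
  all: by rewrite (cl _ _ _ c00 H0) (cl _ _ _ c10 H1). }
move=> s.
have [i Hi] := g_cov G (lin_in _ alpha a b) p.
have [j Hj] := g_cov G (lin_in _ alpha a' b') p'.
have eij := SSb _ _ _ _ _ _ a0 a'0 s Hi Hj.
by exists i; split => //; rewrite eij.
Qed.
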